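(* Every shallow star and every periodic path is unary FA-presentable.
   Context: A template is $(T,\eta,t_0,t_1)$ with $(T,\eta)$ a finite directed tree (a tree with each edge given a direction), $t_0,t_1\in T$, and $t_0$ a leaf. The graph $\mathcal{S}(T,\eta,t_0,t_1)$ is obtained from countably many disjoint copies $(T^{(j)},\eta^{(j)},t_0^{(j)},t_1^{(j)})$, $j\in\{0,1,2,\dots\}$, by identifying the vertices related by the equivalence relation generated by $\{(t_1^{(j)},t_0^{(j+1)}):j\ge 0\}$. If $t_0=t_1$ it is called a shallow star; if $t_0\ne t_1$ a periodic path. A directed graph $(X,\eta)$ is unary FA-presentable if there exist a regular language $L\subseteq a^*$ and a surjection $\phi:L\to X$ such that $\{(u,v)\in L^2:u\phi=v\phi\}$ and $\{(u,v)\in L^2:(u\phi,v\phi)\in\eta\}$ are regular relations (the words $\mathrm{conv}(u,v)$ over $\{a,\$\}^2$, reading $u,v$ in parallel with the shorter padded by $\$$, form regular languages). *)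

(* Defs.v *)
From mathcomp Require Import all_boot.
From Stdlib Require Import Relation_Operators.

Set Implicit Arguments.
Unset Strict Implicit.
Unset Printing Implicit Defensive.

Definition undir (V : finType) (eta : rel V) : rel V :=
  fun x y => eta x y || eta y x.

Definition directed_tree (V : finType) (eta : rel V) : Prop :=
  [/\ forall x, ~~ eta x x,
      forall x y, eta x y -> ~~ eta y x,
      forall x y, connect (undir eta) x y
    & forall s : seq V, uniq s -> 3 <= size s -> ~~ cycle (undir eta) s
                                                  ].

(* t is a leaf: it has at most one neighbour (exactly one unless the tree
   is the one-vertex tree) *)
Definition leaf (V : finType) (eta : rel V) (t : V) : Prop :=
  #|[pred y | undir eta t y]| <= 1.

Definition template (V : finType) (eta : rel V) (t0 t1 : V) : Prop :=
  directed_tree eta /\ leaf eta t0.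

Definition shallow_star (V : finType) (eta : rel V) (t0 t1 : V) : Prop :=
  template eta t0 t1 /\ t0 = t1.

Definition periodic_path (V : finType) (eta : rel V) (t0 t1 : V) : Prop :=
  template eta t0 t1 /\ t0 <> t1.

(* copies are indexed by j : nat; vertex t of copy j is (j, t) *)
Definition S_base (V : finType) (t0 t1 : V) (p q : nat * V) : Prop :=
  q.1 = p.1.+1 /\ p.2 = t1 /\ q.2 = t0.

Definition S_equiv (V : finType) (t0 t1 : V) : nat * V -> nat * V -> Prop :=
  clos_refl_sym_trans (nat * V) (@S_base V t0 t1).

Definition S_vert (V : finType) (t0 t1 : V) : Type :=
  { C : nat * V -> Prop | exists y, C = S_equiv t0 t1 y }.

Definition S_edge (V : finType) (eta : rel V) (t0 t1 : V)
  (C D : S_vert t0 t1) : Prop :=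
  exists j u v, eta u v /\ sval C (j, u) /\ sval D (j, v).

Definition regular (A : finType) (L : seq A -> Prop) : Prop :=
  exists (Q : finType) (q0 : Q) (F : pred Q) (d : Q -> A -> Q),
    forall w, L w <-> F (foldl d q0 w).

(* unary words a^n are identified with n; a set of unary words is regular *)
Definition regular_unary (L : nat -> Prop) : Prop :=
  regular (fun w : seq unit => L (size w)).

(* alphabet {a,$}^2 encoded as bool * bool (true = a, false = $);
   conv(a^m, a^n) *)
Definition conv (m n : nat) : seq (bool * bool) :=
  mkseq (fun i => (i < m, i < n)) (maxn m n).

Definition regular_rel (R : nat -> nat -> Prop) : Prop :=
  regular (fun w : seq (bool * bool) => exists m n, w = conv m n /\ R m n).

Definition unary_FA_presentable (X : Type) (E : X -> X -> Prop) : Prop :=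
  exists (L : nat -> Prop) (phi : {u : nat | L u} -> X),
    [/\ regular_unary L,
        (forall x, exists u, phi u = x),
        regular_rel (fun u v => exists (hu : L u) (hv : L v),
                       phi (exist _ u hu) = phi (exist _ v hv))
      & regular_rel (fun u v => exists (hu : L u) (hv : L v),
                       E (phi (exist _ u hu)) (phi (exist _ v hv)))].

(* Main.v *)
Require Import Defs.
From mathcomp Require Import all_boot zify.
From Stdlib Require Import ClassicalEpsilon Relation_Operators ProofIrrelevance FunctionalExtensionality PropExtensionality.
Set Implicit Arguments. Unset Strict Implicit. Unset Printing Implicit Defensive.

Section Canon.
Variables (N p : nat).
Definition canon k := if k < N then k else N + (k - N) %% p.+1.
Lemma canon_lt k : canon k < N + p.+1.
Proof. rewrite /canon; case: ifP => h; first lia. have := ltn_pmod (k - N) (ltn0Sn p). lia. Qed.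
Lemma canonS k : canon (canon k).+1 = canon k.+1.
Proof.
rewrite /canon; case: (ltnP k N) => h.
  by [].
have -> : ((N + (k - N) %% p.+1).+1 < N) = false by lia.
have -> : (k.+1 < N) = false by lia.
have -> : (N + (k - N) %% p.+1).+1 - N = (k - N) %% p.+1 + 1 by lia.
have -> : k.+1 - N = (k - N) + 1 by lia.
by rewrite modnDml.
Qed.
Lemma per_canon (P : nat -> Prop) :
  (forall k, N <= k -> (P (k + p.+1) <-> P k)) -> forall k, P k <-> P (canon k).
Proof.
move=> H k; rewrite /canon; case: ltnP => // h.
have e : k = N + (k - N) %% p.+1 + (k - N) %/ p.+1 * p.+1.
  have := divn_eq (k - N) p.+1; lia.
rewrite {1}e; elim: ((k - N) %/ p.+1) => [|q IH]; first by rewrite mul0n addn0.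
have -> : N + (k - N) %% p.+1 + q.+1 * p.+1 = N + (k - N) %% p.+1 + q * p.+1 + p.+1 by rewrite mulSn; lia.
rewrite H //; lia.
Qed.
Definition cst k : 'I_(N + p.+1) := Ordinal (canon_lt k).
Lemma cstS k : cst (cst k).+1 = cst k.+1.
Proof. apply: val_inj; exact: canonS. Qed.
Lemma cstS' k : cst (canon k).+1 = cst k.+1.
Proof. apply: val_inj; exact: canonS. Qed.
End Canon.

Definition pb (P : Prop) : bool := if excluded_middle_informative P then true else false.
Lemma pbP (P : Prop) : pb P <-> P.
Proof. rewrite /pb; case: excluded_middle_informative => //. Qed.

Lemma unary_regular N p (L : nat -> Prop) :
  (forall k, N <= k -> (L (k + p.+1) <-> L k)) -> regular_unary L.
Proof.
move=> H.
exists ('I_(N + p.+1)), (cst N p 0), (fun c : 'I_(N + p.+1) => pb (L c)), (fun (c : 'I_(N + p.+1)) (_ : unit) => cst N p c.+1).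
have E : forall w : seq unit, foldl (fun (c : 'I_(N + p.+1)) (_ : unit) => cst N p c.+1) (cst N p 0) w = cst N p (size w).
  elim/last_ind => // w x IH; by rewrite foldl_rcons IH cstS size_rcons.
move=> w; rewrite E pbP /=; exact: per_canon.
Qed.

Lemma eq_in_mkseq T (f g : nat -> T) n : (forall i, i < n -> f i = g i) -> mkseq f n = mkseq g n.
Proof. move=> H; rewrite /mkseq; apply/eq_in_map => i; rewrite mem_iota => /andP [_]; exact: H. Qed.

Lemma conv_tt m : conv m.+1 m.+1 = rcons (conv m m) (true, true).
Proof.
rewrite /conv !maxnn mkseqS !ltnSn; congr rcons; apply: eq_in_mkseq => i h.
by congr pair; apply/idP/idP; lia.
Qed.
Lemma conv_tf m n : n <= m -> conv m.+1 n = rcons (conv m n) (true, false).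
Proof.
move=> h; rewrite /conv.
have -> : maxn m.+1 n = (maxn m n).+1 by lia.
have -> : maxn m n = m by lia.
rewrite mkseqS ltnSn; have -> : (m < n) = false by lia.
congr rcons; apply: eq_in_mkseq => i hi. by congr pair; apply/idP/idP; lia.
Qed.
Lemma conv_ft m n : m <= n -> conv m n.+1 = rcons (conv m n) (false, true).
Proof.
move=> h; rewrite /conv.
have -> : maxn m n.+1 = (maxn m n).+1 by lia.
have -> : maxn m n = n by lia.
rewrite mkseqS ltnSn; have -> : (n < m) = false by lia.
congr rcons; apply: eq_in_mkseq => i hi. by congr pair; apply/idP/idP; lia.
Qed.

Section RelDFA.
Variables (N p : nat) (R : nat -> nat -> Prop).
Local Notation M := (N + p.+1).
Local Notation St := (option ('I_M * option (bool * 'I_M))).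
Definition delta (s : St) (x : bool * bool) : St :=
  match s with
  | None => None
  | Some (c, None) =>
      match x with
      | (true, true) => Some (cst N p c.+1, None)
      | (true, false) => Some (c, Some (true, cst N p 1))
      | (false, true) => Some (c, Some (false, cst N p 1))
      | (false, false) => None
      end
  | Some (c, Some (b, d)) =>
      if x == (b, ~~ b) then Some (c, Some (b, cst N p d.+1)) else None
  end.
Definition acc (s : St) : bool :=
  match s with
  | None => false
  | Some (c, None) => pb (R c c)
  | Some (c, Some (true, d)) => pb (R (c + d) c)
  | Some (c, Some (false, d)) => pb (R c (c + d))
  end.
Definition run (w : seq (bool * bool)) := foldl delta (Some (cst N p 0, None)) w.

Lemma run_tt k : run (conv k k) = Some (cst N p k, None).
Proof. elim: k => [|k IH]; first by []. by rewrite /run conv_tt foldl_rcons -/(run _) IH /= cstS. Qed.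
Lemma run_tf k d : run (conv (k + d.+1) k) = Some (cst N p k, Some (true, cst N p d.+1)).
Proof.
elim: d => [|d IH].
  by rewrite addn1 /run conv_tf // foldl_rcons -/(run _) run_tt.
rewrite (addnS k d.+1) /run conv_tf; last lia.
by rewrite foldl_rcons -/(run _) IH /= ?eqxx ?cstS ?cstS'.
Qed.
Lemma run_ft k d : run (conv k (k + d.+1)) = Some (cst N p k, Some (false, cst N p d.+1)).
Proof.
elim: d => [|d IH].
  by rewrite addn1 /run conv_ft // foldl_rcons -/(run _) run_tt.
rewrite (addnS k d.+1) /run conv_ft; last lia.
by rewrite foldl_rcons -/(run _) IH /= ?eqxx ?cstS ?cstS'.
Qed.

Lemma run_inv w : run w = None \/
  (exists k, w = conv k k /\ run w = Some (cst N p k, None)) \/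
  (exists k d, w = conv (k + d.+1) k /\ run w = Some (cst N p k, Some (true, cst N p d.+1))) \/
  (exists k d, w = conv k (k + d.+1) /\ run w = Some (cst N p k, Some (false, cst N p d.+1))).
Proof.
elim/last_ind: w => [|w x IH]; first by right; left; exists 0.
rewrite /run foldl_rcons -/(run _).
case: IH => [->|[[k [-> ->]]|[[k [d [-> ->]]]|[k [d [-> ->]]]]]]; first by left.
- case: x => [[] []] /=.
  + right; left; exists k.+1; by rewrite conv_tt ?cstS ?cstS'.
  + right; right; left; exists k, 0; by rewrite addn1 conv_tf.
  + right; right; right; exists k, 0; by rewrite addn1 conv_ft.
  + by left.
- case: x => [[] []] /=; try by left.
  right; right; left; exists k, d.+1; rewrite ?cstS ?cstS' (addnS k d.+1) conv_tf //; lia.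
- case: x => [[] []] /=; try by left.
  right; right; right; exists k, d.+1; rewrite ?cstS ?cstS' (addnS k d.+1) conv_ft //; lia.
Qed.

Hypotheses
  (H1 : forall m n, N <= m -> N <= n -> (R (m + p.+1) (n + p.+1) <-> R m n))
  (H2 : forall m n, m + N <= n -> (R m (n + p.+1) <-> R m n))
  (H3 : forall m n, n + N <= m -> (R (m + p.+1) n <-> R m n)).

Lemma inv0 k : R k k <-> R (canon N p k) (canon N p k).
Proof. apply: (@per_canon N p (fun k => R k k)) => j hj; exact: H1. Qed.
Lemma inv1 k e : R (k + e) k <-> R (canon N p k + canon N p e) (canon N p k).
Proof.
rewrite (@per_canon N p (fun e => R (k + e) k)); last first.
  move=> j hj; rewrite addnA; apply: H3; lia.
apply: (@per_canon N p (fun k => R (k + canon N p e) k)) => j hj.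
rewrite -addnA (addnC p.+1) addnA; apply: H1; lia.
Qed.
Lemma inv2 k e : R k (k + e) <-> R (canon N p k) (canon N p k + canon N p e).
Proof.
rewrite (@per_canon N p (fun e => R k (k + e))); last first.
  move=> j hj; rewrite addnA; apply: H2; lia.
apply: (@per_canon N p (fun k => R k (k + canon N p e))) => j hj.
rewrite -addnA (addnC p.+1) addnA; apply: H1; lia.
Qed.

Lemma rel_regular : regular_rel R.
Proof.
exists St, (Some (cst N p 0, None)), acc, delta => w.
rewrite -/(run w); split.
  move=> [m [n [-> hR]]].
  case: (ltngtP m n) => h.
  - have e : n = m + (n - m).-1.+1 by lia.
    by move: hR; rewrite e run_ft /= pbP inv2.
  - have e : m = n + (m - n).-1.+1 by lia.
    by move: hR; rewrite e run_tf /= pbP inv1.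
  - by move: hR; rewrite h run_tt /= pbP inv0.
case: (run_inv w) => [->//|[[k [-> ->]]|[[k [d [-> ->]]]|[k [d [-> ->]]]]]] /=; rewrite pbP.
- by move=> hR; exists k, k; rewrite inv0.
- by move=> hR; exists (k + d.+1), k; rewrite inv1.
- by move=> hR; exists k, (k + d.+1); rewrite inv2.
Qed.
End RelDFA.

Lemma regular_rel_ext (R R' : nat -> nat -> Prop) :
  (forall m n, R m n <-> R' m n) -> regular_rel R' -> regular_rel R.
Proof.
move=> E [Q [q0 [F [d H]]]]; exists Q, q0, F, d => w; rewrite -H.
split; case=> m [k [e h]]; exists m, k; split => //; exact/E.
Qed.
Lemma regular_unary_ext (L L' : nat -> Prop) :
  (forall m, L m <-> L' m) -> regular_unary L' -> regular_unary L.
Proof. move=> E [Q [q0 [F [d H]]]]; exists Q, q0, F, d => w; rewrite -H; exact: E. Qed.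

Section Graph.
Variables (V : finType) (eta : rel V) (t0 t1 : V).
Let n := #|V|.
Lemma n_gt0 : 0 < n.
Proof. exact: leq_ltn_trans (leq0n _) (ltn_ord (enum_rank t0)). Qed.
Definition enc (x : nat * V) : nat := x.1 * n + enum_rank x.2.
Definition rk k : 'I_#|V| := Ordinal (ltn_pmod k n_gt0).
Definition dec k : nat * V := (k %/ n, enum_val (rk k)).
Lemma decK k : enc (dec k) = k.
Proof. by rewrite /enc /dec /= enum_valK /= -divn_eq. Qed.
Lemma encK x : dec (enc x) = x.
Proof.
case: x => j t; rewrite /dec /enc /=.
have hr : enum_rank t < n := ltn_ord _.
rewrite divnMDl ?n_gt0 // divn_small // addn0; congr pair.
rewrite -[t in RHS]enum_rankK; congr enum_val; apply: val_inj => /=.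
by rewrite modnMDl modn_small.
Qed.
Lemma decS k : dec (k + n) = ((dec k).1.+1, (dec k).2).
Proof.
rewrite /dec /=; congr pair.
  by rewrite divnDr ?dvdnn // divnn n_gt0 addn1.
congr enum_val; apply: val_inj => /=; by rewrite modnDr.
Qed.
Lemma dec_big k : n <= k -> exists q t, dec k = (q.+1, t) /\ dec (k + n) = (q.+2, t).
Proof.
move=> h; rewrite decS; exists (k %/ n).-1, (dec k).2.
have : 0 < k %/ n by rewrite divn_gt0 ?n_gt0.
by rewrite /dec /=; case: (k %/ n).
Qed.

Definition f (x : nat * V) : nat * V :=
  if (x.2 == t0) && (0 < x.1) then (if t0 == t1 then (0, t0) else (x.1.-1, t1)) else x.

Lemma f_fix x : (f x == x) = ~~ ((x.2 == t0) && (0 < x.1)).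
Proof.
case: x => j t; rewrite /f /=.
case: (t =P t0) => [->|]; case: j => [|j] //=; rewrite ?eqxx //=.
case: (t0 =P t1) => _ /=; try done; apply/negbTE; apply/eqP; case=> h _; lia.
Qed.



Ltac fsimp := repeat (progress simpl || match goal with
 | e : ?a <> ?b |- context [?b == ?a] => rewrite (eq_sym b a)
 | e : ?a <> ?b |- context [?a == ?b] => rewrite (introF eqP e)
 | e : ?a <> ?b, h : context [?b == ?a] |- _ => rewrite (eq_sym b a) in h
 | e : ?a <> ?b, h : context [?a == ?b] |- _ => rewrite (introF eqP e) in h
 | h : context [?a == ?a] |- _ => rewrite eqxx in h
 | |- context [?a == ?a] => rewrite eqxx
 end).
Ltac fcase j t := case: j => [|j]; rewrite /f /=; case: (t =P t0) => [->|?]; case: (t0 =P t1) => [?|?]; subst; fsimp; try done.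

Lemma f_idem x : f (f x) = f x.
Proof. case: x => j t. by fcase j t. Qed.

Lemma F1 j a i t : f (j, a) = (i.+1, t) -> exists j', j = j'.+1 /\ f (j', a) = (i, t).
Proof. fcase j a; case=> ? ?; subst; eexists; (split; [reflexivity|]); by []. Qed.
Lemma F2 j a i t : f (j, a) = (i.+1, t) -> f (j.+1, a) = (i.+2, t).
Proof. by fcase j a; case=> ? ?; subst. Qed.
Lemma F3 j a i t : f (j, a) = (i, t) -> (i <= j /\ j <= i.+1) \/ (t0 = t1 /\ a = t0 /\ i = 0 /\ t = t0).
Proof. fcase j a; case=> ? ?; subst; first [by left; split; lia | by right; repeat split]. Qed.
Lemma F4 j : t0 = t1 -> f (j, t0) = (0, t0).
Proof. move=> e; subst. by fcase j t1. Qed.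

Lemma f_base x y : S_base t0 t1 x y -> f x = f y.
Proof. case: x y => [j t] [j' t'] [/= -> [-> ->]]. by fcase j t1. Qed.

Lemma chain j : t0 = t1 -> S_equiv t0 t1 (0, t0) (j, t0).
Proof.
move=> e; elim: j => [|j IH]; first exact: rst_refl.
apply: rst_trans IH _; apply: rst_step; rewrite /S_base /= -e; by [].
Qed.

Lemma equiv_f x : S_equiv t0 t1 x (f x).
Proof.
case: x => j t; fcase j t; try exact: rst_refl.
- apply: rst_sym; elim: j => [|j IH]; first by apply: rst_step.
  apply: rst_trans IH _; by apply: rst_step.
- by apply: rst_sym; apply: rst_step.
Qed.

Lemma S_equivP x y : S_equiv t0 t1 x y <-> f x = f y.
Proof.
split.
  elim => {x y} [x y /f_base //| x // | x y _ -> // | x y z _ -> _ -> //].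
move=> e; apply: rst_trans (equiv_f x) _; rewrite e; apply: rst_sym; exact: equiv_f.
Qed.

Definition Lb k : bool := ~~ ((k %% n == enum_rank t0) && (n <= k)).
Lemma Lb_fix k : Lb k = (f (dec k) == dec k).
Proof.
rewrite f_fix /dec /Lb /=; congr (~~ (_ && _)); last by rewrite divn_gt0 // n_gt0.
apply/eqP/eqP => [h|<-]; last by rewrite enum_valK.
have -> : rk k = enum_rank t0 by apply: val_inj.
by rewrite enum_rankK.
Qed.
Lemma Lb_fixP k : Lb k -> f (dec k) = dec k.
Proof. by rewrite Lb_fix => /eqP. Qed.
Lemma Lb_enc x : Lb (enc (f x)).
Proof. by rewrite Lb_fix encK f_idem. Qed.
Lemma LbS k : n <= k -> Lb (k + n) = Lb k.
Proof.
move=> h; rewrite /Lb modnDr; have -> : n <= k + n by lia. by rewrite h.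
Qed.

Definition phi (u : {k | Lb k}) : S_vert t0 t1 :=
  exist _ (S_equiv t0 t1 (dec (sval u))) (ex_intro _ (dec (sval u)) erefl).

Lemma svert_eq (C D : S_vert t0 t1) : sval C = sval D -> C = D.
Proof. case: C => C hC; case: D => D hD /= e; subst; f_equal; apply: proof_irrelevance. Qed.

Lemma phi_surj x : exists u, phi u = x.
Proof.
case: x => C [y e]; exists (exist (fun k => Lb k) _ (Lb_enc y)); apply: svert_eq => /=.
rewrite encK e; apply: functional_extensionality => z; apply: propositional_extensionality.
by rewrite !S_equivP f_idem.
Qed.

Lemma phi_mem u (hu : Lb u) z : sval (phi (exist _ u hu)) z <-> dec u = f z.
Proof. by rewrite /= S_equivP Lb_fixP. Qed.

Lemma eq_rel u v : (exists (hu : Lb u) (hv : Lb v), phi (exist _ u hu) = phi (exist _ v hv))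
  <-> Lb u /\ u = v.
Proof.
split; last by case=> hu <-; exists hu, hu.
case=> hu [hv e]; split => //.
have : sval (phi (exist _ u hu)) (dec v) by rewrite e; exact: rst_refl.
rewrite phi_mem Lb_fixP // => /(congr1 enc); by rewrite !decK.
Qed.

Definition RG (P : V -> V -> Prop) u v :=
  Lb u /\ Lb v /\ exists j a b, P a b /\ dec u = f (j, a) /\ dec v = f (j, b).

Lemma edge_rel u v : (exists (hu : Lb u) (hv : Lb v), S_edge eta (phi (exist _ u hu)) (phi (exist _ v hv)))
  <-> RG (fun a b => eta a b) u v.
Proof.
split.
  case=> hu [hv [j [a [b [e [h1 h2]]]]]]; split => //; split => //.
  by exists j, a, b; move: h1 h2; rewrite !phi_mem.
case=> hu [hv [j [a [b [e [h1 h2]]]]]]; exists hu, hv, j, a, b; by rewrite !phi_mem.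
Qed.

Lemma dec_pair k : dec k = (k %/ n, (dec k).2).
Proof. by []. Qed.

Lemma RG_H1 P u v : 3 * n <= u -> 3 * n <= v -> (RG P (u + n) (v + n) <-> RG P u v).
Proof.
move=> hu hv.
have [qu [tu [Du Du']]] : exists q t, dec u = (q.+1, t) /\ dec (u + n) = (q.+2, t) by apply: dec_big; lia.
have [qv [tv [Dv Dv']]] : exists q t, dec v = (q.+1, t) /\ dec (v + n) = (q.+2, t) by apply: dec_big; lia.
rewrite /RG !LbS; try lia.
rewrite Du Du' Dv Dv'; split; case=> ? [? [j [a [b [e [h1 h2]]]]]]; split => //; split => //.
- have [j1 [ej1 e1]] := F1 (esym h1); have [j2 [ej2 e2]] := F1 (esym h2).
  have ej : j2 = j1 by lia.
  by subst; exists j1, a, b.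
- exists j.+1, a, b; split => //; by rewrite (F2 (esym h1)) (F2 (esym h2)).
Qed.

Lemma far u v j a b : u + 3 * n <= v -> dec u = f (j, a) -> dec v = f (j, b) ->
  t0 = t1 /\ a = t0 /\ dec u = (0, t0).
Proof.
move=> h; rewrite (dec_pair u) (dec_pair v) => ea eb.
have q : u %/ n + 3 <= v %/ n.
  rewrite -(divnDMl 3 u n_gt0); exact: leq_div2r.
case: (F3 (esym ea)) => [[h1 h2]|[e1 [e2 [e3 e4]]]]; case: (F3 (esym eb)) => [[h3 h4]|[e5 [e6 [e7 e8]]]]; try lia.
by rewrite e3 e4.
Qed.

Lemma RG_H2 P u v : u + 3 * n <= v -> (RG P u (v + n) <-> RG P u v).
Proof.
move=> h.
have [qv [tv [Dv Dv']]] : exists q t, dec v = (q.+1, t) /\ dec (v + n) = (q.+2, t) by apply: dec_big; lia.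
rewrite /RG LbS; last lia.
split; case=> ? [? [j [a [b [e [h1 h2]]]]]]; split => //; split => //.
- have h' : u + 3 * n <= v + n by lia.
  have [e1 [e2 e3]] := far h' h1 h2.
  move: h2; rewrite Dv' => /esym /F1 [j' [ej e4]].
  exists j', a, b; split => //; split; last by rewrite Dv.
  by rewrite e3 e2 F4.
- have [e1 [e2 e3]] := far h h1 h2.
  move: h2; rewrite Dv => /esym /F2 e4.
  exists j.+1, a, b; split => //; split; last by rewrite Dv'.
  by rewrite e3 e2 F4.
Qed.

Lemma RG_sym P u v : RG P u v <-> RG (fun a b => P b a) v u.
Proof.
split; case=> h1 [h2 [j [a [b [e [d1 d2]]]]]]; split => //; split => //; by exists j, b, a.
Qed.

Lemma RG_H3 P u v : v + 3 * n <= u -> (RG P (u + n) v <-> RG P u v).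
Proof. move=> h; rewrite !(RG_sym P) ; exact: RG_H2. Qed.
End Graph.

Theorem lemma6p5 (V : finType) (eta : rel V) (t0 t1 : V) :
  (shallow_star eta t0 t1 \/ periodic_path eta t0 t1) ->
  unary_FA_presentable (@S_edge V eta t0 t1).
Proof.
move=> _.
have hn := n_gt0 t0.
exists (fun k => Lb t0 k), (@phi V t0 t1); split.
- apply: (@unary_regular (3 * #|V|) #|V|.-1) => k hk; rewrite prednK // LbS //; lia.
- exact: phi_surj.
- apply: (regular_rel_ext (R' := fun u v => Lb t0 u /\ u = v)).
    move=> m k; exact: eq_rel.
  apply: (@rel_regular (3 * #|V|) #|V|.-1); rewrite prednK //.
  + move=> m k hm hk; rewrite LbS; last lia.
    by split; case=> a b; split => //; lia.
  + by move=> m k h; split; case=> _ ?; lia.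
  + by move=> m k h; split; case=> _ ?; lia.
- apply: (regular_rel_ext (R' := RG t0 t1 (fun a b => eta a b))).
    move=> m k; exact: edge_rel.
  apply: (@rel_regular (3 * #|V|) #|V|.-1); rewrite prednK //.
  + move=> m k hm hk; exact: RG_H1.
  + move=> m k h; exact: RG_H2.
  + move=> m k h; exact: RG_H3.
Qed.
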